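(* Let $F$ be a field with $\mathrm{char}\,F\ne2$ and let $A$ be an involutive $F$-algebra with norm $n(a)=a\bar a$. (1) If $A$ is reversible, then $A$ is von-Neumann finite. (2) If $A$ is von-Neumann finite and $n$ is anisotropic, then $A$ is reversible.
   Context: Algebras are unital, with bilinear not necessarily associative multiplication. $A$ is involutive if there is an anti-automorphism $a\mapsto\bar a$ with $\bar{\bar a}=a$, $a+\bar a\in F1$ and $a\bar a\in F1$ for all $a$; the norm $n(a)=a\bar a\in F$ is a quadratic form, anisotropic if $n(a)\ne0$ for all $a\ne0$. von-Neumann finite: $ab=1\Rightarrow ba=1$; reversible: $ab=0\Rightarrow ba=0$. *)

(* Defs.v *)
From HB Require Import structures.
From mathcomp Require Import all_boot all_order all_algebra.
Set Implicit Arguments. Unset Strict Implicit. Unset Printing Implicit Defensive.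
Import GRing.Theory.
Local Open Scope ring_scope.

(* A unital, not necessarily associative F-algebra: an F-vector space V with
   a bilinear multiplication [mul] and a two-sided unit [one]. *)
Definition unital_algebra (F : fieldType) (V : lmodType F)
    (mul : V -> V -> V) (one : V) : Prop :=
  [/\ (forall (r : F) (a b c : V), mul (r *: a + b) c = r *: mul a c + mul b c),
      (forall (r : F) (a b c : V), mul a (r *: b + c) = r *: mul a b + mul a c),
      (forall a, mul one a = a) &
      (forall a, mul a one = a)].

(* [bar] is an involution: an F-linear anti-automorphism with bar (bar a) = a,
   a + bar a in F1 and a bar a in F1 (bijectivity follows from bar o bar = id). *)
Definition involution (F : fieldType) (V : lmodType F)
    (mul : V -> V -> V) (one : V) (bar : V -> V) : Prop :=
  [/\ (forall (r : F) (a b : V), bar (r *: a + b) = r *: bar a + bar b),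
      (forall a b, bar (mul a b) = mul (bar b) (bar a)),
      (forall a, bar (bar a) = a),
      (forall a, exists t : F, a + bar a = t *: one) &
      (forall a, exists t : F, mul a (bar a) = t *: one)].

(* the norm n(a) is the scalar t with a bar a = t 1; anisotropic: n(a) <> 0 for a <> 0 *)
Definition anisotropic_norm (F : fieldType) (V : lmodType F)
    (mul : V -> V -> V) (one : V) (bar : V -> V) : Prop :=
  forall (a : V) (t : F), a != 0 -> mul a (bar a) = t *: one -> t != 0.

Definition vonNeumann_finite (F : fieldType) (V : lmodType F)
    (mul : V -> V -> V) (one : V) : Prop :=
  forall a b : V, mul a b = one -> mul b a = one.

Definition reversible (F : fieldType) (V : lmodType F)
    (mul : V -> V -> V) : Prop :=
  forall a b : V, mul a b = 0 -> mul b a = 0.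

(* Main.v *)
Require Import Defs.
From mathcomp Require Import all_boot all_order all_algebra.
Import GRing.Theory.
Local Open Scope ring_scope.

Theorem corollary4p10 (F : fieldType) (hF : 2 \notin [pchar F])
    (V : lmodType F) (mul : V -> V -> V) (one : V) (bar : V -> V)
    (hA : unital_algebra mul one) (hbar : involution mul one bar) :
  (reversible mul -> vonNeumann_finite mul one) /\
  (vonNeumann_finite mul one -> anisotropic_norm mul one bar -> reversible mul).
Proof.
have h2 : (2%:R : F) != 0.
  by move: hF; rewrite inE /=.
case: hA => hL hR h1l h1r.
case: hbar => bL bM bb btr bn.
have mul0l : forall c, mul 0 c = 0.
  move=> c; have := hL 1 0 0 c; rewrite !scale1r addr0 => h.
  by apply: (addrI (mul 0 c)); rewrite addr0 -h.
have mul0r : forall c, mul c 0 = 0.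
  move=> c; have := hR 1 c 0 0; rewrite !scale1r addr0 => h.
  by apply: (addrI (mul c 0)); rewrite addr0 -h.
have mulDl : forall a b c, mul (a + b) c = mul a c + mul b c.
  by move=> a b c; rewrite -[a]scale1r hL !scale1r.
have mulDr : forall a b c, mul c (a + b) = mul c a + mul c b.
  by move=> a b c; rewrite -[a]scale1r hR !scale1r.
have mulZl : forall r a c, mul (r *: a) c = r *: mul a c.
  by move=> r a c; rewrite -[r *: a]addr0 hL mul0l addr0.
have mulZr : forall r a c, mul c (r *: a) = r *: mul c a.
  by move=> r a c; rewrite -[r *: a]addr0 hR mul0r addr0.
have mulNl : forall a c, mul (- a) c = - mul a c.
  by move=> a c; rewrite -scaleN1r mulZl scaleN1r.
have mulNr : forall a c, mul c (- a) = - mul c a.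
  by move=> a c; rewrite -scaleN1r mulZr scaleN1r.
have mulBl : forall a b c, mul (a - b) c = mul a c - mul b c.
  by move=> a b c; rewrite mulDl mulNl.
have mulBr : forall a b c, mul c (a - b) = mul c a - mul c b.
  by move=> a b c; rewrite mulDr mulNr.
have bar0 : bar 0 = 0.
  have := bL 1 0 0; rewrite !scale1r addr0 => h.
  by apply: (addrI (bar 0)); rewrite addr0 -h.
have barD : forall a b, bar (a + b) = bar a + bar b.
  by move=> a b; rewrite -[a]scale1r bL !scale1r.
have barZ : forall r a, bar (r *: a) = r *: bar a.
  by move=> r a; rewrite -[r *: a]addr0 bL bar0 addr0.
have bar1 : bar one = one.
  have rid : forall z, mul z (bar one) = z.
    by move=> z; rewrite -[z]bb -bM h1l.
  by rewrite -[bar one]h1l rid.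
have comm : forall x, mul (bar x) x = mul x (bar x).
  move=> x; have [t ht] := btr x.
  have -> : bar x = t *: one - x by rewrite -ht addrC addKr.
  by rewrite mulBl mulBr mulZl mulZr h1l h1r.
split.
- move=> rev a b hab.
  have [na hna] := bn a.
  have [nb hnb] := bn b.
  have hbb : mul (bar b) (bar a) = one by rewrite -bM hab bar1.
  have key : mul (bar a) (bar b) + mul b a = one + one.
    have := comm (a + bar b).
    rewrite barD bb !mulDl !mulDr comm (comm b) hab hbb => h.
    apply: (addrI (mul a (bar a))); apply: (addIr (mul b (bar b))).
    by rewrite !addrA in h *.
  have [na0|na0] := eqVneq na 0; last first.
    have h0 : mul a (bar a - na *: b) = 0 by rewrite mulBr mulZr hna hab subrr.
    have := rev _ _ h0; rewrite mulBl mulZl comm hna => /eqP.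
    rewrite subr_eq0 => /eqP h.
    by apply: (scalerI na0); rewrite h.
  have [nb0|nb0] := eqVneq nb 0; last first.
    have h0 : mul (bar b) (nb *: bar a - b) = 0.
      by rewrite mulBr mulZr hbb (comm b) hnb subrr.
    have := rev _ _ h0; rewrite mulBl mulZl hnb => /eqP.
    rewrite subr_eq0 => /eqP h.
    have h' : mul (bar a) (bar b) = one by apply: (scalerI nb0).
    by move: key; rewrite h' => /addrI.
  have h0 : mul (a - bar b) (bar a + b) = 0.
    rewrite mulBl !mulDr hab hbb hna (comm b) hnb na0 nb0 scale0r.
    by rewrite add0r addr0 subrr.
  have := rev _ _ h0; rewrite !mulDl !mulBr (comm a) hna hnb na0 nb0 scale0r.
  rewrite subr0 sub0r => /eqP; rewrite addrC subr_eq0 => /eqP h.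
  move: key; rewrite -h -!mulr2n -!scaler_nat => h3.
  by apply: (scalerI h2).
- move=> vnf an a b hab.
  have [n hn] := bn a.
  have [a0|a0] := eqVneq a 0; first by rewrite a0 mul0r.
  have n0 := an a n a0 hn.
  have h1 : mul a (b + n^-1 *: bar a) = one.
    by rewrite mulDr mulZr hn hab add0r scalerA mulVf // scale1r.
  have := vnf _ _ h1; rewrite mulDl mulZl comm hn scalerA mulVf // scale1r => h.
  by apply: (addIr one); rewrite add0r.
Qed.
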